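(* Let $G$ be a finitely presented group given by a presentation $P=\langle x_1,\ldots,x_n\mid u_1^{m_1},\ldots,u_r^{m_r}\rangle$ with $n,m_i\ge 1$, where each $u_i$ is an element of the free group $F_n$ on $x_1,\ldots,x_n$ that is not a proper power in $F_n$. Let $\varphi:F_n\to G$ be the canonical map, $R_G$ the finite residual of $G$, and $k_i$ the order of $\varphi(u_i)R_G$ in $G/R_G$. Then there exist finite index normal subgroups $H$ of $G$ such that the order of $\varphi(u_i)H$ in $G/H$ is $k_i$ for all $1\le i\le r$. Moreover, every such $H$ satisfies \[def(H)\ge 1+|G:H|\,(rdef(P)-1),\qquad\text{where } rdef(P)=n-\sum_{i=1}^r\frac1{k_i}.\]
   Context: The finite residual $R_G$ of $G$ is the intersection of all finite index subgroups of $G$. The deficiency of a finite presentation $\langle X\mid R\rangle$ is $|X|-|R|$, and $def(H)$ is the supremum of deficiencies over all finite presentations of $H$. The quantity $rdef(P)$ is the residual deficiency of the presentation $P$ (each $k_i$ is finite since $u_i^{m_i}$ is trivial in $G$). *)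

(* Defs.v *)
From mathcomp Require Import all_boot all_order all_algebra.
From Stdlib Require Import Relations.
Set Implicit Arguments. Unset Strict Implicit. Unset Printing Implicit Defensive.
Import GRing.Theory Num.Theory.

Record Grp := MkGrp {
  carrier :> Type;
  gmul : carrier -> carrier -> carrier;
  ginv : carrier -> carrier;
  gone : carrier;
  gmulA : forall x y z, gmul x (gmul y z) = gmul (gmul x y) z;
  gmul1 : forall x, gmul gone x = x;
  gmulV : forall x, gmul (ginv x) x = gone }.

Definition gpow (G : Grp) (x : G) (k : nat) : G := iter k (gmul x) (gone G).

(* Words in the free group F_n: letters (i, b), b = true meaning x_i^{-1}. *)
Definition letter (n : nat) := ('I_n * bool)%type.
Definition word (n : nat) := seq (letter n).
Definition linv n (l : letter n) : letter n := (l.1, ~~ l.2).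
Definition winv n (w : word n) : word n := rev (map (@linv n) w).
Definition wpow n (w : word n) (k : nat) : word n := flatten (nseq k w).

(* one-step free reduction, and free equality (= equality in F_n) *)
Inductive red_step n : word n -> word n -> Prop :=
  | RedStep : forall (a b : word n) (l : letter n),
      red_step (a ++ [:: l; linv l] ++ b) (a ++ b).
Definition freeq n : relation (word n) := clos_refl_sym_trans _ (@red_step n).

Definition proper_power n (u : word n) : Prop :=
  exists (v : word n) (k : nat), 2 <= k /\ freeq u (wpow v k).

Inductive in_ncl n (R : seq (word n)) : word n -> Prop :=
  | ncl_nil : in_ncl R [::]
  | ncl_conj : forall v r w, r \in R -> in_ncl R w ->
      in_ncl R (v ++ r ++ winv v ++ w)
  | ncl_conjV : forall v r w, r \in R -> in_ncl R w ->
      in_ncl R (v ++ winv r ++ winv v ++ w)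
  | ncl_freeq : forall w w', freeq w w' -> in_ncl R w -> in_ncl R w'.

Definition eval (G : Grp) n (g : 'I_n -> G) (w : word n) : G :=
  foldr (fun l acc => gmul (if l.2 then ginv (g l.1) else g l.1) acc) (gone G) w.

Definition subgroup (G : Grp) (H : G -> Prop) : Prop :=
  H (gone G) /\ (forall x y, H x -> H y -> H (gmul x y)) /\
  (forall x, H x -> H (ginv x)).
Definition normal_subgroup (G : Grp) (H : G -> Prop) : Prop :=
  subgroup H /\ forall x y, H x -> H (gmul (ginv y) (gmul x y)).

Definition index_is (G : Grp) (H : G -> Prop) (d : nat) : Prop :=
  exists s : 'I_d -> G,
    (forall x, exists j, H (gmul (ginv (s j)) x)) /\
    (forall j j', H (gmul (ginv (s j)) (s j')) -> j = j').
Definition finite_index (G : Grp) (H : G -> Prop) : Prop :=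
  subgroup H /\ exists d, index_is H d.

Definition finite_residual (G : Grp) : G -> Prop :=
  fun x => forall K : G -> Prop, finite_index K -> K x.

Definition order_mod (G : Grp) (N : G -> Prop) (x : G) (k : nat) : Prop :=
  0 < k /\ N (gpow x k) /\ forall j, 0 < j < k -> ~ N (gpow x j).

Definition presents (G : Grp) n (g : 'I_n -> G) (R : seq (word n)) : Prop :=
  (forall x : G, exists w, eval g w = x) /\
  (forall w, eval g w = gone G <-> in_ncl R w).

Definition presents_sub (G : Grp) (H : G -> Prop) m (h : 'I_m -> G)
    (R : seq (word m)) : Prop :=
  (forall j, H (h j)) /\
  (forall x : G, H x -> exists w, eval h w = x) /\
  (forall w, eval h w = gone G <-> in_ncl R w).

(* def(H) >= c, where def(H) is the supremum of |X| - |R| over all finite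
   presentations <X | R> of H *)
Definition deficiency_ge (G : Grp) (H : G -> Prop) (c : rat) : Prop :=
  forall e : rat, (0 < e)%R ->
    exists m (h : 'I_m -> G) (R : seq (word m)),
      presents_sub H h R /\ (c - e < m%:R - (size R)%:R :> rat)%R.

Definition relators n r (u : 'I_r -> word n) (mm : 'I_r -> nat) : seq (word n) :=
  [seq wpow (u i) (mm i) | i <- enum 'I_r].

(* Main.v *)
Require Import Defs.
From mathcomp Require Import all_boot all_order all_algebra.
From mathcomp Require Import zify ring lra.
From Stdlib Require Import Relations ClassicalEpsilon Classical.
Set Implicit Arguments. Unset Strict Implicit. Unset Printing Implicit Defensive.
Import GRing.Theory Num.Theory.


Section GrpLemmas.
Variable G : Grp.
Local Notation "x * y" := (gmul x y).
Local Notation "1" := (gone G).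
Local Notation "x ^-1" := (ginv x).

Lemma gmulVr (x : G) : x * x^-1 = 1.
Proof.
rewrite -[x * x^-1]gmul1 -{1}(gmulV (x^-1)) -gmulA [x^-1 * (x * x^-1)]gmulA gmulV gmul1.
by rewrite gmulV.
Qed.

Lemma gmulr1 (x : G) : x * 1 = x.
Proof. by rewrite -(gmulV x) gmulA gmulVr gmul1. Qed.

Lemma gmulKV (x y : G) : x^-1 * (x * y) = y.
Proof. by rewrite gmulA gmulV gmul1. Qed.

Lemma gmulK (x y : G) : x * (x^-1 * y) = y.
Proof. by rewrite gmulA gmulVr gmul1. Qed.

Lemma gmulI (x y z : G) : x * y = x * z -> y = z.
Proof. by move=> e; rewrite -(gmulKV x y) e gmulKV. Qed.

Lemma ginvK (x : G) : (x^-1)^-1 = x.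
Proof. by apply: (@gmulI (x^-1)); rewrite gmulVr gmulV. Qed.

Lemma ginv1 : (1 : G)^-1 = 1.
Proof. by rewrite -{2}(gmulV 1) gmulr1. Qed.

Lemma ginvM (x y : G) : (x * y)^-1 = y^-1 * x^-1.
Proof.
apply: (@gmulI (x * y)); rewrite gmulVr -gmulA [y * (y^-1 * x^-1)]gmulA gmulVr gmul1.
by rewrite gmulVr.
Qed.

Lemma ginv_eq1 (x y : G) : x * y = 1 -> y = x^-1.
Proof. by move=> e; rewrite -(gmulKV x y) e gmulr1. Qed.

End GrpLemmas.


Section Words.
Variable n : nat.
Implicit Types (a b c v w : word n) (l : letter n).

Lemma linvK l : linv (linv l) = l.
Proof. by case: l => x []. Qed.

Lemma winv_cat a b : winv (a ++ b) = winv b ++ winv a.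
Proof. by rewrite /winv map_cat rev_cat. Qed.

Lemma winv_cons l w : winv (l :: w) = winv w ++ [:: linv l].
Proof. by rewrite /winv /= rev_cons -cats1. Qed.

Lemma winvK w : winv (winv w) = w.
Proof.
by rewrite /winv map_rev -map_comp (eq_map (g:=id)) ?map_id ?revK // => l /=; rewrite linvK.
Qed.

Lemma winv_nil : winv ([::] : word n) = [::].
Proof. by []. Qed.

Lemma red_step_ctx c d a a' : red_step a a' -> red_step (c ++ a ++ d) (c ++ a' ++ d).
Proof.
case=> x y l.
have -> : c ++ (x ++ [:: l; linv l] ++ y) ++ d = (c ++ x) ++ [:: l; linv l] ++ (y ++ d) by rewrite !catA.
have -> : c ++ (x ++ y) ++ d = (c ++ x) ++ (y ++ d) by rewrite !catA.
exact: RedStep.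
Qed.

Lemma freeq_ctx c d a a' : freeq a a' -> freeq (c ++ a ++ d) (c ++ a' ++ d).
Proof.
elim=> [x y r|x|x y _ IH|x y z _ IH1 _ IH2].
- by apply: rst_step; apply: red_step_ctx.
- exact: rst_refl.
- exact: rst_sym.
- exact: rst_trans IH1 IH2.
Qed.

Lemma freeq_catl c a a' : freeq a a' -> freeq (c ++ a) (c ++ a').
Proof. by move=> h; have := freeq_ctx c [::] h; rewrite !cats0. Qed.

Lemma freeq_catr d a a' : freeq a a' -> freeq (a ++ d) (a' ++ d).
Proof. by move=> h; have := freeq_ctx [::] d h. Qed.

Lemma freeq_sym a b : freeq a b -> freeq b a.
Proof. exact: rst_sym. Qed.

Lemma freeq_trans a b c : freeq a b -> freeq b c -> freeq a c.
Proof. exact: rst_trans. Qed.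

Lemma freeq_refl a : freeq a a.
Proof. exact: rst_refl. Qed.

Lemma freeq_winvl v : freeq (winv v ++ v) [::].
Proof.
elim: v => [|l v IH] /=; first exact: freeq_refl.
rewrite winv_cons -catA.
apply: freeq_trans IH.
have -> : [:: linv l] ++ l :: v = [:: linv l; linv (linv l)] ++ v by rewrite linvK.
by apply: rst_step; apply: RedStep.
Qed.

Lemma freeq_winvr v : freeq (v ++ winv v) [::].
Proof. by have := freeq_winvl (winv v); rewrite winvK. Qed.

Lemma freeq_cancel a b : freeq (winv a ++ a ++ b) b.
Proof. by rewrite catA; have := freeq_catr b (freeq_winvl a). Qed.

Lemma wpow_add w i j : wpow w (i + j) = wpow w i ++ wpow w j.
Proof. by rewrite /wpow nseqD flatten_cat. Qed.

Lemma wpowS w i : wpow w i.+1 = w ++ wpow w i.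
Proof. by []. Qed.

Lemma wpowC w i j : wpow w i ++ wpow w j = wpow w j ++ wpow w i.
Proof. by rewrite -!wpow_add addnC. Qed.

Variable R : seq (word n).

Lemma ncl_mem r : r \in R -> in_ncl R r.
Proof. by move=> rR; have := ncl_conj [::] rR (ncl_nil R); rewrite /= cats0. Qed.

Lemma ncl_cat a b : in_ncl R a -> in_ncl R b -> in_ncl R (a ++ b).
Proof.
move=> ha hb; elim: ha => [|v r w rR _ IH|v r w rR _ IH|w w' e _ IH] //.
- by rewrite -!catA; apply: ncl_conj.
- by rewrite -!catA; apply: ncl_conjV.
- by apply: ncl_freeq IH; apply: freeq_catr.
Qed.

Lemma ncl_conjw c a : in_ncl R a -> in_ncl R (c ++ a ++ winv c).
Proof.
elim=> [|v r w rR _ IH|v r w rR _ IH|w w' e _ IH].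
- apply: ncl_freeq (ncl_nil R); apply: freeq_sym; exact: freeq_winvr.
- have h := ncl_conj (c ++ v) rR IH.
  apply: ncl_freeq h; rewrite winv_cat -!catA.
  do 4 apply: freeq_catl; exact: freeq_cancel.
- have h := ncl_conjV (c ++ v) rR IH.
  apply: ncl_freeq h; rewrite winv_cat -!catA.
  do 4 apply: freeq_catl; exact: freeq_cancel.
- apply: ncl_freeq IH; apply: freeq_catl; apply: freeq_catr; exact: e.
Qed.

Lemma red_step_winv a b : red_step a b -> red_step (winv a) (winv b).
Proof.
case=> x y l; rewrite !winv_cat.
have -> : winv [:: l; linv l] = [:: l; linv l].
  by rewrite /winv /= linvK.
rewrite -catA; exact: RedStep.
Qed.

Lemma freeq_winv a b : freeq a b -> freeq (winv a) (winv b).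
Proof.
elim=> [x y r|x|x y _ IH|x y z _ IH1 _ IH2].
- by apply: rst_step; apply: red_step_winv.
- exact: rst_refl.
- exact: rst_sym.
- exact: rst_trans IH1 IH2.
Qed.

Lemma ncl_winv a : in_ncl R a -> in_ncl R (winv a).
Proof.
elim=> [|v r w rR _ IH|v r w rR _ IH|w w' e _ IH] //.
- exact: ncl_nil.
- rewrite !winv_cat winvK -!catA; apply: ncl_cat IH _.
  by have := ncl_conjV v rR (ncl_nil R); rewrite cats0.
- rewrite !winv_cat !winvK -!catA; apply: ncl_cat IH _.
  by have := ncl_conj v rR (ncl_nil R); rewrite cats0.
- by apply: ncl_freeq IH; apply: freeq_winv.
Qed.

End Words.

Section Eval.
Variables (G : Grp) (n : nat) (g : 'I_n -> G).
Implicit Types (a b c v w : word n) (l : letter n).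

Lemma eval_cat a b : eval g (a ++ b) = gmul (eval g a) (eval g b).
Proof. by elim: a => [|l a IH] /=; rewrite ?gmul1 // IH gmulA. Qed.

Lemma eval_cons l w : eval g (l :: w) = gmul (eval g [:: l]) (eval g w).
Proof. by rewrite /= gmulr1. Qed.

Lemma eval_winv w : eval g (winv w) = ginv (eval g w).
Proof.
elim: w => [|l w IH]; first by rewrite /= ginv1.
rewrite winv_cons eval_cat IH eval_cons ginvM; congr gmul.
by case: l => x [] /=; rewrite !gmulr1 ?ginvK.
Qed.

Lemma eval_red a b : red_step a b -> eval g a = eval g b.
Proof.
case=> x y l; rewrite !eval_cat; congr gmul.
by case: l => z []; rewrite /= gmulr1 ?gmulV ?gmulVr gmul1.
Qed.

Lemma eval_freeq a b : freeq a b -> eval g a = eval g b.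
Proof.
elim=> [x y r|x|x y _ IH|x y z _ IH1 _ IH2] //; first exact: eval_red.
by rewrite IH1.
Qed.

Lemma eval_wpow w k : eval g (wpow w k) = gpow (eval g w) k.
Proof. by elim: k => [|k IH] //; rewrite wpowS eval_cat IH. Qed.

Lemma eval_ncl (R : seq (word n)) w :
  (forall r, r \in R -> eval g r = gone G) -> in_ncl R w -> eval g w = gone G.
Proof.
move=> hR; elim=> [|v r w' rR _ IH|v r w' rR _ IH|w1 w2 e _ IH] //.
- by rewrite !eval_cat (hR r rR) IH gmul1 eval_winv gmulr1 gmulVr.
- by rewrite !eval_cat eval_winv (hR r rR) ginv1 IH gmul1 eval_winv gmulr1 gmulVr.
- by rewrite -(eval_freeq e).
Qed.

End Eval.


Ltac gsimpl := rewrite ?gmulr1 ?gmul1 ?ginvM ?ginvK ?ginv1 -?gmulA ?gmulKV ?gmulK ?gmulV ?gmulVr ?gmulr1 ?gmul1.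

Section NormalFacts.
Variables (G : Grp) (H : G -> Prop) (hN : normal_subgroup H).

Lemma nH1 : H (gone G). Proof. by case: hN => [[]]. Qed.
Lemma nHM x y : H x -> H y -> H (gmul x y). Proof. by case: hN => [[_ []]] ; auto. Qed.
Lemma nHV x : H x -> H (ginv x). Proof. by case: hN => [[_ []]] ; auto. Qed.
Lemma nHJ x y : H x -> H (gmul (ginv y) (gmul x y)). Proof. by case: hN => _; auto. Qed.
Lemma nHJ' x y : H x -> H (gmul y (gmul x (ginv y))).
Proof. by move=> hx; have := nHJ (ginv y) hx; rewrite ginvK. Qed.
Lemma nHVE x : H (ginv x) -> H x.
Proof. by move=> h; have := nHV h; rewrite ginvK. Qed.
Lemma nHMl h x : H h -> H (gmul h x) -> H x.
Proof. by move=> hh hx; have := nHM (nHV hh) hx; rewrite gmulKV. Qed.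
Lemma nHMr h x : H h -> H (gmul x h) -> H x.
Proof. by move=> hh hx; have := nHM hx (nHV hh); rewrite -gmulA gmulVr gmulr1. Qed.
End NormalFacts.

Section Cosets.
Variables (G : Grp) (n : nat) (g : 'I_n -> G) (H : G -> Prop) (hN : normal_subgroup H).
Variables (d : nat) (c : 'I_d -> G).
Hypothesis cover : forall x, exists j, H (gmul (ginv (c j)) x).
Hypothesis cuniq : forall j j', H (gmul (ginv (c j)) (c j')) -> j = j'.

Definition coset_of (z : G) : 'I_d := proj1_sig (constructive_indefinite_description _ (cover z)).
Lemma coset_ofP z : H (gmul (ginv (c (coset_of z))) z).
Proof. exact: (proj2_sig (constructive_indefinite_description _ (cover z))). Qed.

Lemma coset_uniq j z : H (gmul (ginv (c j)) z) -> j = coset_of z.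
Proof.
move=> h; apply: cuniq; have := nHM hN h (nHV hN (coset_ofP z)).
by rewrite ginvM ginvK -!gmulA gmulK.
Qed.

Lemma coset_eq z z' : H (gmul (ginv z) z') -> coset_of z = coset_of z'.
Proof.
move=> h; apply: coset_uniq; have := nHM hN (coset_ofP z) h.
by rewrite -!gmulA gmulK.
Qed.

Lemma coset_c t : coset_of (c t) = t.
Proof. by apply/esym/coset_uniq; rewrite gmulV; exact: nH1 hN. Qed.

Definition next (t : 'I_d) (l : letter n) := coset_of (gmul (c t) (eval g [:: l])).
Definition act (t : 'I_d) (w : word n) := foldl next t w.

Lemma actE t w : act t w = coset_of (gmul (c t) (eval g w)).
Proof.
elim: w t => [|l w IH] t; first by rewrite /= gmulr1 coset_c.
have -> : act t (l :: w) = act (next t l) w by [].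
rewrite IH; apply: coset_eq.
rewrite eval_cons ginvM -!gmulA gmul1.
have := nHJ hN (eval g w) (coset_ofP (gmul (c t) (eval g [:: l]))).
by rewrite /next /= !gmulr1 -!gmulA.
Qed.

Lemma act_cat t a b : act t (a ++ b) = act (act t a) b.
Proof. by rewrite /act foldl_cat. Qed.

Lemma act_id t w : H (eval g w) -> act t w = t.
Proof. by move=> h; rewrite actE; apply/esym/coset_uniq; rewrite gmulKV. Qed.

Lemma act_idE t w : act t w = t -> H (eval g w).
Proof.
move=> e; have := coset_ofP (gmul (c t) (eval g w)).
by rewrite -actE e gmulKV.
Qed.

Lemma act_eval t a b : eval g a = eval g b -> act t a = act t b.
Proof. by rewrite !actE => ->. Qed.

Lemma act_winv t v : act (act t v) (winv v) = t.
Proof.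
rewrite -act_cat; apply: act_id; rewrite eval_cat eval_winv gmulVr; exact: nH1 hN.
Qed.

Lemma act_pair t l : next (next t l) (linv l) = t.
Proof.
have := @act_id t [:: l; linv l]; rewrite /act /=; apply.
by case: l => x [] /=; rewrite gmulr1 ?gmulV ?gmulVr; exact: nH1 hN.
Qed.

Lemma act_cs t l : act t [:: l] = next t l. Proof. by []. Qed.

(* Reidemeister rewriting *)
Definition m := #|{: 'I_d * 'I_n}|.
Definition ylet (t : 'I_d) (l : letter n) : letter m :=
  if l.2 then (enum_rank (next t l, l.1), true) else (enum_rank (t, l.1), false).

Fixpoint tau (t : 'I_d) (w : word n) : word m :=
  if w is l :: w' then ylet t l :: tau (next t l) w' else [::].

Lemma tau_cat t a b : tau t (a ++ b) = tau t a ++ tau (act t a) b.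
Proof. by elim: a t => [|l a IH] t //=; rewrite IH. Qed.

Lemma ylet_inv t l : ylet (next t l) (linv l) = linv (ylet t l).
Proof.
case: l => x [] /=; rewrite /ylet /linv /=; first by [].
by have := act_pair t (x, false); rewrite /linv /= => ->.
Qed.

Lemma tau_pair t l : tau t [:: l; linv l] = [:: ylet t l; linv (ylet t l)].
Proof. by rewrite /= ylet_inv. Qed.

Lemma tau_red t a b : red_step a b -> red_step (tau t a) (tau t b).
Proof.
case=> x y l; rewrite !tau_cat tau_pair.
have -> : act (act t x) [:: l; linv l] = act t x by rewrite /act /= act_pair.
exact: RedStep.
Qed.

Lemma act_red t a b : red_step a b -> act t a = act t b.
Proof. by move=> h; apply: act_eval; apply: eval_red. Qed.

Lemma act_freeq t a b : freeq a b -> act t a = act t b.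
Proof. by move=> h; apply: act_eval; apply: eval_freeq. Qed.

Lemma tau_freeq a b : freeq a b -> forall t, freeq (tau t a) (tau t b).
Proof.
elim=> [x y r|x|x y _ IH|x y z _ IH1 _ IH2] t.
- by apply: rst_step; apply: tau_red.
- exact: rst_refl.
  exact: rst_sym (IH t).
- exact: rst_trans (IH1 t) (IH2 t).
Qed.

Lemma tau_winv t v : tau (act t v) (winv v) = winv (tau t v).
Proof.
elim: v t => [|l v IH] t //=.
rewrite winv_cons tau_cat -/(act (next t l) v) IH winv_cons; congr cat.
rewrite act_winv /= ylet_inv //.
Qed.

Section Orbits.
Variables (u : word n) (k : nat).
Hypothesis hk : order_mod H (eval g u) k.


Lemma k_gt0 : 0 < k. Proof. by case: hk. Qed.

Lemma act_wpow_k t : act t (wpow u k) = t.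
Proof. by apply: act_id; rewrite eval_wpow; case: hk => _ []. Qed.

Lemma act_wpow_mulk t q : act t (wpow u (q * k)) = t.
Proof.
elim: q => [|q IH] //; rewrite mulSn wpow_add act_cat act_wpow_k //.
Qed.

Lemma act_wpow_mod t a : act t (wpow u a) = act t (wpow u (a %% k)).
Proof. by rewrite {1}(divn_eq a k) wpow_add act_cat act_wpow_mulk. Qed.

Lemma act_wpow_inj t j j' : j < k -> j' < k -> act t (wpow u j) = act t (wpow u j') -> j = j'.
Proof.
wlog ljj : j j' / j <= j'.
  move=> W hj hj' e; case: (leqP j j') => l; first exact: W.
  by apply/esym/W => //; apply: ltnW.
move=> hj hj' e; apply/eqP; rewrite eqn_leq ljj /=; apply/negP => /negP; rewrite -ltnNge => lt.
have e2 : act (act t (wpow u j)) (wpow u (j' - j)) = act t (wpow u j).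
  by rewrite -act_cat -wpow_add subnKC // e.
have := act_idE e2; rewrite eval_wpow; case: hk => _ [_]; apply.
by rewrite subn_gt0 lt /= (leq_ltn_trans (leq_subr _ _) hj').
Qed.

Definition orb_set : {set 'I_d} := [set t : 'I_d | [forall j : 'I_k, (t <= act t (wpow u j))%N]].

Lemma orb_setP t0 : t0 \in orb_set -> forall a, (t0 <= act t0 (wpow u a))%N.
Proof.
rewrite inE => /forallP h a; rewrite act_wpow_mod.
exact: (h (Ordinal (ltn_pmod a k_gt0))).
Qed.

Lemma orbit_cover t : exists2 t0, t0 \in orb_set & exists j, act t0 (wpow u j) = t.
Proof.
pose P := fun v : nat => [exists j : 'I_k, (act t (wpow u j) : nat) == v].
have ex : exists v, P v by exists (act t (wpow u 0)); apply/existsP; exists (Ordinal k_gt0).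
case: (ex_minnP ex) => v /existsP [j0 /eqP ej0] minv.
exists (act t (wpow u j0)).
  rewrite inE; apply/forallP => j; rewrite ej0 -act_cat -wpow_add act_wpow_mod.
  by apply: minv; apply/existsP; exists (Ordinal (ltn_pmod (j0 + j) k_gt0)).
exists (k - j0); rewrite -act_cat -wpow_add subnKC ?act_wpow_k //.
exact: ltnW.
Qed.

Lemma orbit_card : #|orb_set| * k <= d.
Proof.
pose f := fun p : 'I_d * 'I_k => act p.1 (wpow u p.2).
have inj : {in setX orb_set [set: 'I_k] &, injective f}.
  move=> [t0 j] [t0' j']; rewrite !in_setX !in_setT /= !andbT => h0 h0' e.
  rewrite /f /= in e.
  have et : t0 = t0'.
    apply: val_inj; apply/eqP; rewrite eqn_leq; apply/andP; split.
    - have := orb_setP h0 (j + (k - j')).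
      by rewrite wpow_add act_cat e -act_cat -wpow_add subnKC ?act_wpow_k // ltnW.
    - have := orb_setP h0' (j' + (k - j)).
      by rewrite wpow_add act_cat -e -act_cat -wpow_add subnKC ?act_wpow_k // ltnW.
  subst t0'; congr pair; apply: val_inj; exact: act_wpow_inj e.
have := card_in_imset inj; rewrite cardsX cardsT card_ord => <-.
by rewrite -[X in _ <= X]card_ord max_card.
Qed.


Lemma orbit_rel (R' : seq (word m)) (mm : nat) :
  eval g (wpow u mm) = gone G ->
  (forall t0, t0 \in orb_set -> in_ncl R' (tau t0 (wpow u mm))) ->
  forall t, in_ncl R' (tau t (wpow u mm)).
Proof.
move=> e1 hR t; case: (orbit_cover t) => t0 h0 [j ej].
have hr := hR t0 h0.
have hid : act t0 (wpow u mm) = t0 by apply: act_id; rewrite e1; exact: nH1 hN.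
have E : tau t0 (wpow u j) ++ tau t (wpow u mm) = tau t0 (wpow u mm) ++ tau t0 (wpow u j).
  by rewrite -ej -tau_cat wpowC tau_cat hid.
apply: ncl_freeq (freeq_cancel (tau t0 (wpow u j)) (tau t (wpow u mm))) _.
rewrite E; have := ncl_conjw (winv (tau t0 (wpow u j))) hr.
by rewrite winvK catA.
Qed.

End Orbits.


Section Pres.
Variables (b : 'I_d) (S : 'I_d -> word n).
Hypothesis hcb : c b = gone G.
Hypothesis hS : forall t, eval g (S t) = c t.
Hypothesis hSb : S b = [::].

Definition hY (j : 'I_m) : G :=
  let p := enum_val j in gmul (gmul (c p.1) (g p.2)) (ginv (c (next p.1 (p.2, false)))).

Definition psil (y : letter m) : word n :=
  let p := enum_val y.1 in
  let w := S p.1 ++ [:: (p.2, false)] ++ winv (S (next p.1 (p.2, false))) in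
  if y.2 then winv w else w.

Definition psi (w : word m) : word n := flatten (map psil w).

Definition Pw t := tau b (S t).

Lemma eval_ylet t l : eval hY [:: ylet t l] = gmul (gmul (c t) (eval g [:: l])) (ginv (c (next t l))).
Proof.
case: l => x []; rewrite /ylet /= /hY enum_rankK /=.
- have := act_pair t (x, true); rewrite /linv /= => ->.
  by rewrite !gmulr1 !ginvM !ginvK -!gmulA.
- by rewrite !gmulr1 -!gmulA.
Qed.

Lemma eval_tau t w : eval hY (tau t w) = gmul (gmul (c t) (eval g w)) (ginv (c (act t w))).
Proof.
elim: w t => [|l w IH] t; first by rewrite /= gmulr1 gmulVr.
have -> : tau t (l :: w) = [:: ylet t l] ++ tau (next t l) w by [].
have -> : act t (l :: w) = act (next t l) w by [].
by rewrite eval_cat IH eval_ylet [eval g (l :: w)]eval_cons -!gmulA gmulKV.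
Qed.

Lemma hY_in j : H (hY j).
Proof.
rewrite /hY; set p := enum_val j.
have := nHJ' hN (c (next p.1 (p.2, false))) (coset_ofP (gmul (c p.1) (eval g [:: (p.2, false)]))).
by rewrite /next /= !gmulr1 -!gmulA gmulK.
Qed.

Lemma eval_psil y : eval g (psil y) = eval hY [:: y].
Proof.
case: y => j []; rewrite /psil /=.
- rewrite eval_winv eval_cat [eval g (_ :: _)]eval_cons eval_winv !hS /hY /= !gmulr1.
  by rewrite -!gmulA.
- rewrite eval_cat [eval g (_ :: _)]eval_cons eval_winv !hS /hY /= !gmulr1.
  by rewrite -!gmulA.
Qed.

Lemma eval_psi w : eval g (psi w) = eval hY w.
Proof.
elim: w => [|y w IH] //=; rewrite eval_cat IH eval_psil /= gmulr1 //.
Qed.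

Lemma act_S t : act b (S t) = t.
Proof. by rewrite actE hcb gmul1 hS coset_c. Qed.

Lemma eval_psil_in y : H (eval g (psil y)).
Proof.
rewrite eval_psil; case: y => j [] /=; rewrite gmulr1; last exact: hY_in.
apply: (nHV hN). exact: hY_in.
Qed.

Lemma act_psil y : act b (psil y) = b.
Proof. exact: act_id (eval_psil_in y). Qed.

Lemma tau_psil y : exists t1 t2, tau b (psil y) = Pw t1 ++ [:: y] ++ winv (Pw t2).
Proof.
have base : forall j, tau b (psil (j, false)) =
    Pw (enum_val j).1 ++ [:: (j, false)] ++ winv (Pw (next (enum_val j).1 ((enum_val j).2, false))).
  move=> j; set t := (enum_val j).1; set x := (enum_val j).2.
  have -> : psil (j, false) = S t ++ [:: (x, false)] ++ winv (S (next t (x, false))) by [].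
  rewrite !tau_cat act_S.
  have -> : act t [:: (x, false)] = next t (x, false) by [].
  have := tau_winv b (S (next t (x, false))); rewrite act_S => ->.
  have -> : tau t [:: (x, false)] = [:: (enum_rank (t, x), false)] by [].
  by rewrite /t /x -surjective_pairing enum_valK.
case: y => j [].
- exists (next (enum_val j).1 ((enum_val j).2, false)), (enum_val j).1.
  have hid : act b (psil (j, false)) = b by exact: act_psil.
  have -> : psil (j, true) = winv (psil (j, false)) by [].
  rewrite -{1}hid tau_winv base !winv_cat winvK -catA; congr cat.
- by exists (enum_val j).1, (next (enum_val j).1 ((enum_val j).2, false)); rewrite base.
Qed.

Lemma ncl_tau_psi (R' : seq (word m)) :
  (forall t, in_ncl R' (Pw t)) -> forall w, in_ncl R' (tau b (psi w) ++ winv w).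
Proof.
move=> hP; elim=> [|y w IH]; first exact: ncl_nil.
have -> : psi (y :: w) = psil y ++ psi w by [].
rewrite tau_cat act_psil winv_cons.
case: (tau_psil y) => t1 [t2 ->]; rewrite -!catA.
have -> : Pw t1 ++ [:: y] ++ winv (Pw t2) ++ tau b (psi w) ++ winv w ++ [:: linv y]
    = Pw t1 ++ ([:: y] ++ (winv (Pw t2) ++ (tau b (psi w) ++ winv w)) ++ winv [:: y]).
  by rewrite !catA.
apply: ncl_cat (hP t1) _; apply: ncl_conjw; apply: ncl_cat IH.
exact: ncl_winv (hP t2).
Qed.

Lemma ncl_from_psi (R' : seq (word m)) w :
  (forall t, in_ncl R' (Pw t)) -> in_ncl R' (tau b (psi w)) -> in_ncl R' w.
Proof.
move=> hP h; have h1 := ncl_winv (ncl_tau_psi hP w).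
rewrite winv_cat winvK in h1.
have h2 := ncl_cat h1 h.
apply: ncl_freeq h2; rewrite -catA -[X in freeq _ X]cats0; apply: freeq_catl.
exact: freeq_winvl.
Qed.

End Pres.

Lemma tau_ncl (R : seq (word n)) (R' : seq (word m)) :
  (forall r, r \in R -> eval g r = gone G) ->
  (forall r, r \in R -> forall t, in_ncl R' (tau t r)) ->
  forall w, in_ncl R w -> forall t, in_ncl R' (tau t w).
Proof.
move=> hRe hRt w; elim=> [|v r w' rR _ IH|v r w' rR _ IH|w1 w2 e _ IH] t.
- exact: ncl_nil.
- have hid : act (act t v) r = act t v by apply: act_id; rewrite hRe //; exact: nH1 hN.
  rewrite !tau_cat hid tau_winv act_winv !catA; apply: ncl_cat (IH t).
  rewrite -catA; exact: ncl_conjw (hRt r rR _).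
- have hid : act (act t v) (winv r) = act t v.
    by apply: act_id; rewrite eval_winv hRe // ginv1; exact: nH1 hN.
  have hid' : act (act t v) r = act t v by apply: act_id; rewrite hRe //; exact: nH1 hN.
  have e2 : tau (act t v) (winv r) = winv (tau (act t v) r) by rewrite -{1}hid' tau_winv.
  rewrite !tau_cat hid e2 tau_winv act_winv !catA; apply: ncl_cat (IH t).
  rewrite -catA; exact: ncl_conjw (ncl_winv (hRt r rR _)).
- by apply: ncl_freeq (IH t); apply: tau_freeq.
Qed.

End Cosets.


Definition decP (P : Prop) : bool := if excluded_middle_informative P then true else false.
Lemma decPP (P : Prop) : reflect P (decP P).
Proof. by rewrite /decP; case: excluded_middle_informative => h; constructor. Qed.

Section Family.
Variables (G : Grp) (I : finType) (K : I -> G -> Prop).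
Hypothesis hK : forall i, finite_index (K i).

Let Ksub i : subgroup (K i). Proof. by case: (hK i). Qed.
Let K1 i : K i (gone G). Proof. by case: (Ksub i). Qed.
Let KM i x y : K i x -> K i y -> K i (gmul x y). Proof. by case: (Ksub i) => _ []; auto. Qed.
Let KV i x : K i x -> K i (ginv x). Proof. by case: (Ksub i) => _ []; auto. Qed.

Let exD i : { D : nat & { s : 'I_D -> G | forall x, exists j, K i (gmul (ginv (s j)) x) } }.
Proof.
have h : exists D, exists s : 'I_D -> G, forall x, exists j, K i (gmul (ginv (s j)) x).
  by case: (hK i) => _ [D [s [h _]]]; exists D, s.
case: (constructive_indefinite_description _ h) => D h'.
case: (constructive_indefinite_description _ h') => s hs.
by exists D; exists s.
Defined.

Let D i := projT1 (exD i).
Let s0 i : 'I_(D i) -> G := proj1_sig (projT2 (exD i)).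
Let s0P i x : exists j, K i (gmul (ginv (@s0 i j)) x) := proj2_sig (projT2 (exD i)) x.

Let Dm := \max_i D i.
Let s i (a : 'I_Dm) : G := if insub (val a) is Some j then @s0 i j else gone G.

Let sP i x : exists a, K i (gmul (ginv (s i a)) x).
Proof.
case: (s0P i x) => j hj.
have hle : D i <= Dm by rewrite /Dm; exact: (@leq_bigmax _ (fun i => D i) i).
exists (widen_ord hle j).
by rewrite /s /= valK.
Qed.

Let C i (z : G) : option 'I_Dm := [pick a | decP (K i (gmul (ginv (s i a)) z))].

Let C_eq i z z' : K i (gmul (ginv z) z') -> C i z = C i z'.
Proof.
move=> h; apply: eq_pick => a /=; apply/decPP/decPP => h1.
- by have := KM h1 h; rewrite -gmulA gmulK.
- by have := KM h1 (KV h); rewrite ginvM ginvK -!gmulA gmulK.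
Qed.

Let C_eqE i z z' : C i z = C i z' -> K i (gmul (ginv z) z').
Proof.
rewrite /C; case: pickP => [a /decPP ha|h0].
  case: pickP => [a' /decPP ha' [e]|]; last by [].
  subst a'; have := KM (KV ha) ha'; by rewrite ginvM ginvK -!gmulA gmulK.
exfalso; case: (sP i z) => a ha; have := h0 a; rewrite /=.
by case: decPP.
Qed.

Definition famH (x : G) : Prop := forall i z, K i (gmul (ginv z) (gmul x z)).

Lemma famH_normal : normal_subgroup famH.
Proof.
split; [split; [|split]|].
- by move=> i z; rewrite gmul1 gmulV.
- move=> x y hx hy i z; have := KM (hx i z) (hy i z).
  by rewrite -!gmulA gmulK.
- move=> x hx i z; have := KV (hx i z); by rewrite !ginvM ginvK -!gmulA.
- move=> x y hx i z; have := hx i (gmul y z).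
  by rewrite !ginvM -!gmulA.
Qed.

Lemma famH_sub i x : famH x -> K i x.
Proof. by move=> h; have := h i (gone G); rewrite ginv1 gmul1 gmulr1. Qed.

Let sigma (x : G) : {ffun I * 'I_Dm -> option 'I_Dm} :=
  [ffun p => C p.1 (gmul x (s p.1 p.2))].

Let sigmaE x y : sigma x = sigma y -> famH (gmul (ginv x) y).
Proof.
move=> e i z; case: (sP i z) => a ha.
have h0 : sigma x (i, a) = sigma y (i, a) by rewrite e.
rewrite !ffunE /= in h0; have h := C_eqE h0.
have := KM (KM (KV ha) h) ha.
by rewrite !ginvM !ginvK -!gmulA !gmulK.
Qed.

Let sigmaI x y : famH (gmul (ginv x) y) -> sigma x = sigma y.
Proof.
move=> h; apply/ffunP => [[i a]]; rewrite !ffunE /=; apply: C_eq.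
by have := h i (s i a); rewrite ginvM -!gmulA.
Qed.

Lemma famH_index : finite_index famH.
Proof.
split; first by case: famH_normal.
pose Im := [set f | decP (exists x, sigma x = f)].
exists #|Im|.
have ex : forall j : 'I_#|Im|, exists x, sigma x = enum_val j.
  by move=> j; have := enum_valP j; rewrite inE => /decPP.
pose rep j := proj1_sig (constructive_indefinite_description _ (ex j)).
have repP : forall j, sigma (rep j) = enum_val j.
  by move=> j; exact: proj2_sig (constructive_indefinite_description _ (ex j)).
exists rep; split.
- move=> x; have hx : sigma x \in Im by rewrite inE; apply/decPP; exists x.
  exists (enum_rank_in hx (sigma x)); apply: sigmaE.
  by rewrite repP enum_rankK_in.
- move=> j j' h; apply: enum_val_inj; rewrite -!repP; exact: sigmaI.
Qed.

End Family.


Lemma part2 (G : Grp) (n r : nat) (u : 'I_r -> word n) (mm : 'I_r -> nat)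
  (g : 'I_n -> G) (k : 'I_r -> nat) (hpres : presents g (relators u mm))
  (H : G -> Prop) (d : nat) (hN : normal_subgroup H) (hidx : index_is H d)
  (hord : forall i, order_mod H (eval g (u i)) (k i)) :
  deficiency_ge H (1 + d%:R * ((n%:R - \sum_(i < r) ((k i)%:R)^-1) - 1) : rat)%R.
Proof.
case: hpres => surj hrel.
case: hidx => s [covs uniqs].
have [b hb] := covs (gone G).
have hsbi : H (ginv (s b)) by move: hb; rewrite gmulr1.
have hsb : H (s b) := nHVE hN hsbi.
pose c (t : 'I_d) := if t == b then gone G else s t.
have hcb : c b = gone G by rewrite /c eqxx.
have cover : forall x, exists j, H (gmul (ginv (c j)) x).
  move=> x; case: (covs x) => j hj; exists j; rewrite /c.
  case: eqP => [ej|_]; last exact: hj.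
  subst j; rewrite ginv1 gmul1.
  by have := nHM hN hsb hj; rewrite gmulK.
have cuniq : forall j j', H (gmul (ginv (c j)) (c j')) -> j = j'.
  move=> j j'; rewrite /c; case: eqP => [->|nj]; case: eqP => [->|nj'] //.
  - rewrite ginv1 gmul1 => h; apply: uniqs.
    exact: (nHM hN hsbi h).
  - rewrite gmulr1 => h; apply: uniqs.
    exact: (nHM hN h hsb).
  - exact: uniqs.
pose S (t : 'I_d) : word n := if t == b then [::]
  else proj1_sig (constructive_indefinite_description _ (surj (s t))).
have hS : forall t, eval g (S t) = c t.
  move=> t; rewrite /S /c; case: eqP => // _.
  exact: proj2_sig (constructive_indefinite_description _ (surj (s t))).
have hSb : S b = [::] by rewrite /S eqxx.
pose Rt := [seq Pw g cover b S t | t <- enum 'I_d & t != b].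
pose O i := orb_set g cover (u i) (k i).
pose Ro := flatten [seq [seq tau g cover t (wpow (u i) (mm i)) | t <- enum (O i)] | i <- enum 'I_r].
pose R' := Rt ++ Ro.
have hRe : forall r, r \in relators u mm -> eval g r = gone G.
  by move=> r0 hr; apply/hrel; exact: ncl_mem.
have hP : forall t, in_ncl R' (Pw g cover b S t).
  move=> t; case: (eqVneq t b) => [->|ntb].
    rewrite /Pw hSb; exact: ncl_nil.
  apply: ncl_mem; rewrite mem_cat; apply/orP; left.
  by apply/mapP; exists t => //; rewrite mem_filter ntb mem_enum.
have hRt : forall r0, r0 \in relators u mm -> forall t, in_ncl R' (tau g cover t r0).
  move=> r0 /mapP [i _ ->] t.
  apply: (orbit_rel hN cuniq (hord i)).
    by apply: hRe; apply/mapP; exists i => //; rewrite mem_enum.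
  move=> t0 h0; apply: ncl_mem; rewrite mem_cat; apply/orP; right.
  apply/flattenP; exists [seq tau g cover t1 (wpow (u i) (mm i)) | t1 <- enum (O i)].
    by apply/mapP; exists i => //; rewrite mem_enum.
  by apply/mapP; exists t0 => //; rewrite mem_enum.
move=> eps heps.
exists (m n d), (hY g cover), R'; split.
  split; first by move=> j; apply: (hY_in g hN cover).
  split.
    move=> x hx; case: (surj x) => W eW; exists (tau g cover b W).
    rewrite (eval_tau g hN cover cuniq) hcb eW.
    rewrite (act_id hN cover cuniq b (w:=W)) ?eW // hcb ginv1 gmul1 gmulr1 //.
  move=> w; split.
    move=> e1; apply: (ncl_from_psi hN cuniq hcb hS hP).
    apply: (tau_ncl hN cuniq hRe hRt); apply/hrel.
    by rewrite (eval_psi cover hS).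
  apply: eval_ncl => r0; rewrite mem_cat => /orP [].
    move=> /mapP [t _ ->]; rewrite /Pw (eval_tau g hN cover cuniq) hcb gmul1 hS.
    by rewrite (act_S hN cover cuniq hcb hS) gmulVr.
  move=> /flattenP [s0 /mapP [i _ ->] /mapP [t0 _ ->]].
  have e1 : eval g (wpow (u i) (mm i)) = gone G.
    by apply: hRe; apply/mapP; exists i => //; rewrite mem_enum.
  rewrite (eval_tau g hN cover cuniq) (act_id hN cover cuniq t0); last by rewrite e1; exact: nH1 hN.
  by rewrite e1 gmulr1 gmulVr.
have d_gt0 : (0 < d)%N by apply: leq_ltn_trans (ltn_ord b).
have hm : m n d = (d * n)%N by rewrite /m card_prod !card_ord.
have hsRt : (size Rt <= d.-1)%N.
  rewrite size_map size_filter.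
  have := count_predC (fun t => t != b) (enum 'I_d).
  rewrite size_enum_ord.
  have : (0 < count (predC (fun t => t != b)) (enum 'I_d))%N.
    rewrite -has_count; apply/hasP; exists b; first by rewrite mem_enum.
    by rewrite /= eqxx.
  set y := count (predC _) _; set x := count _ _; move=> h1 h2; lia.
have hsRo : size Ro = (\sum_(i < r) #|O i|)%N.
  rewrite size_flatten /shape -map_comp sumnE big_map big_enum /=.
  by apply: eq_bigr => i _; rewrite size_map -cardE.
have hO : forall i, (#|O i|%:R <= d%:R / (k i)%:R :> rat)%R.
  move=> i; have kp : (0 < k i)%N by case: (hord i).
  rewrite ler_pdivlMr ?ltr0n // -natrM ler_nat.
  exact: (orbit_card hN cover cuniq (hord i)).
have hSO : ((\sum_(i < r) #|O i|)%:R <= d%:R * \sum_(i < r) ((k i)%:R)^-1 :> rat)%R.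
  rewrite natr_sum mulr_sumr; apply: ler_sum => i _; exact: hO.
have hsz : ((size R')%:R <= (d%:R - 1) + (\sum_(i < r) #|O i|)%:R :> rat)%R.
  rewrite size_cat hsRo natrD lerD2r.
  have -> : (d%:R - 1 = (d.-1)%:R :> rat)%R by rewrite -{1}(prednK d_gt0) -natr1 addrK.
  by rewrite ler_nat.
have hm2 : ((m n d)%:R = d%:R * n%:R :> rat)%R by rewrite hm natrM.
rewrite hm2.
move: hsz hSO heps.
set D := (d%:R : rat); set N := (n%:R : rat); set Sk := (\sum_(i < r) _)%R.
set So := ((\sum_(i < r) #|O i|)%:R : rat); set sz := ((size R')%:R : rat).
move=> h1 h2 h3; lra.
Qed.


Lemma finite_index_top (G : Grp) : finite_index (fun _ : G => True).
Proof.
split; first by split; [|split].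
exists 1, (fun _ => gone G); split; first by move=> x; exists ord0.
by move=> j j' _; rewrite (ord1 j) (ord1 j').
Qed.

Theorem mainTheorem8 (G : Grp) (n r : nat) (u : 'I_r -> word n)
    (mm : 'I_r -> nat) (g : 'I_n -> G) (k : 'I_r -> nat) :
  1 <= n ->
  (forall i, 1 <= mm i) ->
  (forall i, ~ proper_power (u i)) ->
  presents g (relators u mm) ->
  (forall i, order_mod (@finite_residual G) (eval g (u i)) (k i)) ->
  (exists H : G -> Prop, normal_subgroup H /\ finite_index H /\
      forall i, order_mod H (eval g (u i)) (k i)) /\
  (forall (H : G -> Prop) (d : nat), normal_subgroup H -> index_is H d ->
      (forall i, order_mod H (eval g (u i)) (k i)) ->
      deficiency_ge H (1 + d%:R * ((n%:R - \sum_(i < r) ((k i)%:R)^-1) - 1)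
                       : rat)%R).
Proof.
move=> hn hmm hpp hpres hres; split; last first.
  by move=> H d hN hidx hord; exact: (part2 hpres hN hidx hord).
pose M := (\max_(i < r) k i).
have exK : forall p : 'I_r * 'I_M, exists K : G -> Prop,
    finite_index K /\ ((0 < p.2 < k p.1)%N -> ~ K (gpow (eval g (u p.1)) p.2)).
  move=> [i j] /=; case: (boolP (0 < j < k i)%N) => hj.
    case: (hres i) => _ [_ hno].
    have := hno j hj; rewrite /finite_residual => /not_all_ex_not [K hK].
    case: (imply_to_and _ _ hK) => h1 h2.
    by exists K; split.
  exists (fun _ => True); split; first exact: finite_index_top.
  by move=> h; case/negP: hj.
pose K p := proj1_sig (constructive_indefinite_description _ (exK p)).
have hK : forall p, finite_index (K p) /\ ((0 < p.2 < k p.1)%N -> ~ K p (gpow (eval g (u p.1)) p.2)).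
  by move=> p; exact: proj2_sig (constructive_indefinite_description _ (exK p)).
have hKf : forall p, finite_index (K p) by move=> p; case: (hK p).
exists (famH K); split; first exact: famH_normal.
have hfi := famH_index hKf.
split; first exact: hfi.
move=> i; split; first by case: (hres i).
split; first by case: (hres i) => _ [hk _]; exact: hk _ hfi.
move=> j hj hH.
have jM : (j < M)%N.
  case/andP: hj => _ hj; apply: leq_trans hj _.
  exact: (@leq_bigmax _ (fun i => k i) i).
have := (proj2 (hK (i, Ordinal jM))) hj; apply.
exact: famH_sub hH.
Qed.
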